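(* Let $\mu$ be a boundedly supported Borel probability measure on $\mathbb{R}$ and let $q_0>1$ be such that $\alpha_0=\tau_\mu'(q_0)$ exists. For every $\kappa>0$ there is $\varepsilon=\varepsilon(\kappa,q_0)>0$ such that for all sufficiently large $m$: if $\mathcal{D}'\subset\mathcal{D}_m$ has at most $2^{(\tau_\mu^*(\alpha_0)-\kappa)m}$ elements, then \[ \sum_{J\in\mathcal{D}'}\mu(J)^{q_0}\le 2^{-(\tau_\mu(q_0)+\varepsilon)m}. \]
   Context: Logs base 2. $\mathcal{D}_m=\{[j2^{-m},(j+1)2^{-m}):j\in\mathbb{Z}\}$. For $q>0$, $\tau_\mu(q)=\liminf_{m\to\infty}-\frac1m\log\sum_{J\in\mathcal{D}_m,\mu(J)>0}\mu(J)^q$, and $\tau_\mu^*(\alpha)=\inf_{q>0}(\alpha q-\tau_\mu(q))$. *)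

(* Defs.v *)
From Stdlib Require Import Reals Lra Lia ZArith List ClassicalEpsilon.
Open Scope R_scope.

Inductive borel : (R -> Prop) -> Prop :=
| borel_interval (a b : R) : borel (fun x => a < x < b)
| borel_compl (A : R -> Prop) : borel A -> borel (fun x => ~ A x)
| borel_union (A : nat -> R -> Prop) :
    (forall n, borel (A n)) -> borel (fun x => exists n, A n x).

(** A Borel probability measure on R (values off Borel sets are irrelevant). *)
Definition is_borel_prob_measure (mu : (R -> Prop) -> R) : Prop :=
  (forall A B : R -> Prop, (forall x, A x <-> B x) -> mu A = mu B) /\
  (forall A, borel A -> 0 <= mu A) /\
  mu (fun _ => True) = 1 /\
  (forall A : nat -> R -> Prop,
     (forall n, borel (A n)) ->
     (forall i j x, i <> j -> A i x -> A j x -> False) ->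
     infinite_sum (fun n => mu (A n)) (mu (fun x => exists n, A n x))).

Definition bounded_support (mu : (R -> Prop) -> R) : Prop :=
  exists M : R, mu (fun x => M < Rabs x) = 0.

Definition log2 (x : R) : R := ln x / ln 2.

Definition rpow (x q : R) : R :=
  if Rlt_dec 0 x then Rpower x q else 0.

Definition dyadic (m : nat) (j : Z) : R -> Prop :=
  fun x => IZR j / 2 ^ m <= x < (IZR j + 1) / 2 ^ m.

Definition term (mu : (R -> Prop) -> R) (q : R) (m : nat) (j : Z) : R :=
  if Rlt_dec 0 (mu (dyadic m j)) then Rpower (mu (dyadic m j)) q else 0.

Definition partial_S (mu : (R -> Prop) -> R) (q : R) (m K : nat) : R :=
  sum_f_R0 (fun n => term mu q m (Z.of_nat n - Z.of_nat K)%Z) (2 * K).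

(** S_m(q) = sum over J in D_m with mu(J) > 0 of mu(J)^q. *)
Definition S_sum (mu : (R -> Prop) -> R) (q : R) (m : nat) : R :=
  epsilon (inhabits 0) (fun l => Un_cv (partial_S mu q m) l).

Definition is_liminf (a : nat -> R) (t : R) : Prop :=
  (forall e, 0 < e -> exists N, forall n, (N <= n)%nat -> t - e < a n) /\
  (forall e, 0 < e -> forall N, exists n, (N <= n)%nat /\ a n < t + e).

Definition Rliminf (a : nat -> R) : R := epsilon (inhabits 0) (is_liminf a).

Definition is_inf (E : R -> Prop) (t : R) : Prop :=
  (forall x, E x -> t <= x) /\ (forall u, (forall x, E x -> u <= x) -> u <= t).

Definition Rinf (E : R -> Prop) : R := epsilon (inhabits 0) (is_inf E).

Definition tau (mu : (R -> Prop) -> R) (q : R) : R :=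
  Rliminf (fun m => - (/ INR m) * log2 (S_sum mu q m)).

Definition tau_star (mu : (R -> Prop) -> R) (alpha : R) : R :=
  Rinf (fun y => exists q, 0 < q /\ y = alpha * q - tau mu q).

Definition sum_list (l : list R) : R := fold_right Rplus 0 l.

(* Main.v *)
Require Import Defs.
From Stdlib Require Import Reals ZArith List Lia Lra ClassicalEpsilon FunctionalExtensionality PropExtensionality.
From Coquelicot Require Rbar Lim_seq.
Open Scope R_scope.


Lemma set_ext (A B : R -> Prop) : (forall x, A x <-> B x) -> A = B.
Proof. intros H; apply functional_extensionality; intros x; apply propositional_extensionality; auto. Qed.

Lemma borel_empty : borel (fun _ => False).
Proof.
  replace (fun _ : R => False) with (fun x => 0 < x < 0).
  - constructor.
  - apply set_ext; intros x; split; [lra| tauto].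
Qed.

Lemma borel_union2 A B : borel A -> borel B -> borel (fun x => A x \/ B x).
Proof.
  intros HA HB.
  replace (fun x => A x \/ B x) with (fun x => exists n:nat, (match n with O => A | _ => B end) x).
  - constructor; intros [|n]; auto.
  - apply set_ext; intros x; split.
    + intros [[|n] H]; auto.
    + intros [H|H]; [exists O|exists 1%nat]; auto.
Qed.

Lemma borel_ext A B : (forall x, A x <-> B x) -> borel A -> borel B.
Proof. intros H; rewrite (set_ext A B H); auto. Qed.

Lemma borel_inter A B : borel A -> borel B -> borel (fun x => A x /\ B x).
Proof.
  intros HA HB. apply borel_ext with (fun x => ~ (~ A x \/ ~ B x)).
  - intros x; tauto.
  - constructor; apply borel_union2; constructor; auto.
Qed.

Lemma borel_lt b : borel (fun x => x < b).
Proof.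
  apply borel_ext with (fun x => exists n:nat, b - INR n - 1 < x < b).
  - intros x; split.
    + intros [n Hn]; lra.
    + intros Hx. destruct (archimed (b - x)) as [H1 H2].
      exists (Z.to_nat (up (b - x))).
      rewrite INR_IZR_INZ, Z2Nat.id.
      * lra.
      * apply le_IZR; lra.
  - constructor; intros; constructor.
Qed.

Lemma borel_gt a : borel (fun x => a < x).
Proof.
  apply borel_ext with (fun x => exists n:nat, a < x < a + INR n + 1).
  - intros x; split.
    + intros [n Hn]; lra.
    + intros Hx. destruct (archimed (x - a)) as [H1 H2].
      exists (Z.to_nat (up (x - a))).
      rewrite INR_IZR_INZ, Z2Nat.id.
      * lra.
      * apply le_IZR; lra.
  - constructor; intros; constructor.
Qed.

Lemma borel_dyadic m j : borel (dyadic m j).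
Proof.
  unfold dyadic. apply borel_ext with (fun x => ~ (x < IZR j / 2^m) /\ x < (IZR j + 1)/2^m).
  - intros x; split; intros [H1 H2]; split; auto; lra.
  - apply borel_inter; [constructor|]; apply borel_lt.
Qed.

Lemma borel_abs M : borel (fun x => M < Rabs x).
Proof.
  apply borel_ext with (fun x => M < x \/ x < - M).
  - intros x; unfold Rabs; destruct (Rcase_abs x); split; intros; lra.
  - apply borel_union2; [apply borel_gt|apply borel_lt].
Qed.

Lemma mu_ext mu A B : is_borel_prob_measure mu -> (forall x, A x <-> B x) -> mu A = mu B.
Proof. intros [H _]; apply H. Qed.

Lemma mu_pos mu A : is_borel_prob_measure mu -> borel A -> 0 <= mu A.
Proof. intros [_ [H _]]; apply H. Qed.

Lemma sum_const_R c n : sum_f_R0 (fun _ => c) n = INR (S n) * c.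
Proof. induction n; simpl sum_f_R0. simpl; ring. rewrite IHn, !S_INR; ring. Qed.

Lemma mu_empty mu : is_borel_prob_measure mu -> mu (fun _ => False) = 0.
Proof.
  intros Hm. pose proof Hm as [_ [_ [_ Hc]]].
  specialize (Hc (fun _ => fun _ => False) (fun _ => borel_empty)).
  assert (E: mu (fun _ => exists _:nat, False) = mu (fun _ => False)).
  { apply mu_ext; auto. intros x; split; [intros [_ []]| tauto]. }
  assert (H: infinite_sum (fun n => mu (fun _ => False)) (mu (fun _ => False))).
  { assert (Hc' := Hc (fun _ _ _ _ f _ => f)). cbv beta in Hc'. rewrite E in Hc'. exact Hc'. }
  set (c := mu (fun _ => False)) in *.
  destruct (Req_dec c 0) as [|Hne]; auto. exfalso.
  destruct (H (Rabs c / 2)) as [N HN]. { pose proof (Rabs_pos_lt c Hne); lra. }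
  specialize (HN (S N) (Nat.le_succ_diag_r N)).
  rewrite sum_const_R in HN. unfold Rdist in HN.
  replace (INR (S (S N)) * c - c) with (INR (S N) * c) in HN by (rewrite (S_INR (S N)); ring).
  rewrite Rabs_mult, (Rabs_right (INR _)) in HN by (apply Rle_ge, pos_INR).
  pose proof (Rabs_pos_lt c Hne). assert (1 <= INR (S N)) by (rewrite S_INR; pose proof (pos_INR N); lra).
  nra.
Qed.

Lemma infinite_sum_eventually f N : (forall n, (n > N)%nat -> f n = 0) -> infinite_sum f (sum_f_R0 f N).
Proof.
  intros H eps Heps. exists N. intros n Hn.
  replace (sum_f_R0 f n) with (sum_f_R0 f N). unfold Rdist; rewrite Rminus_diag, Rabs_R0; lra.
  induction Hn; auto. simpl. rewrite H by lia. rewrite IHHn; ring.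
Qed.

Lemma mu_add2 mu A B : is_borel_prob_measure mu -> borel A -> borel B ->
  (forall x, A x -> B x -> False) -> mu (fun x => A x \/ B x) = mu A + mu B.
Proof.
  intros Hm HA HB Hd. pose proof Hm as [_ [_ [_ Hc]]].
  set (F := fun n:nat => match n with O => A | 1%nat => B | _ => fun _ : R => False end).
  assert (HF: forall n, borel (F n)). { intros [|[|n]]; simpl; auto using borel_empty. }
  assert (HD: forall i j x, i <> j -> F i x -> F j x -> False).
  { intros [|[|i]] [|[|j]] x Hij; simpl; try tauto; intros; try lia; eauto. }
  specialize (Hc F HF HD).
  assert (E: mu (fun x => exists n, F n x) = mu (fun x => A x \/ B x)).
  { apply mu_ext; auto. intros x; split.
    - intros [[|[|n]] Hn]; simpl in Hn; tauto.
    - intros [H|H]; [exists O|exists 1%nat]; auto. }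
  rewrite E in Hc.
  assert (Hs: infinite_sum (fun n => mu (F n)) (sum_f_R0 (fun n => mu (F n)) 1)).
  { apply infinite_sum_eventually. intros [|[|n]] Hn; try lia. apply mu_empty; auto. }
  rewrite (uniqueness_sum _ _ _ Hc Hs). simpl. ring.
Qed.

Lemma mu_compl mu A : is_borel_prob_measure mu -> borel A -> mu A + mu (fun x => ~ A x) = 1.
Proof.
  intros Hm HA. rewrite <- mu_add2; auto. 2: constructor; auto.
  destruct Hm as [He [_ [H1 _]]]. rewrite <- H1. apply He. intros x; split; auto. intros _. apply Classical_Prop.classic.
Qed.

Lemma mu_mono mu A B : is_borel_prob_measure mu -> borel A -> borel B -> (forall x, A x -> B x) -> mu A <= mu B.
Proof.
  intros Hm HA HB Hs.
  assert (E: mu B = mu (fun x => A x \/ (B x /\ ~ A x))).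
  { apply mu_ext; auto. intros x; split; [|intros [H|[H _]]; auto].
    intros Hb. destruct (Classical_Prop.classic (A x)); auto. }
  rewrite E, mu_add2; auto. 
  - assert (Hb: borel (fun x => B x /\ ~ A x)) by (apply borel_inter; auto; constructor; auto). pose proof (mu_pos mu _ Hm Hb). lra.
  - apply borel_inter; auto; constructor; auto.
  - tauto.
Qed.

Lemma mu_le1 mu A : is_borel_prob_measure mu -> borel A -> mu A <= 1.
Proof.
  intros Hm HA. rewrite <- (mu_compl mu A Hm HA). assert (Hb: borel (fun x => ~ A x)) by (constructor; auto). pose proof (mu_pos mu _ Hm Hb). lra.
Qed.


Definition sL {A} (f : A -> R) (l : list A) : R := sum_list (map f l).

Lemma sL_nil {A} (f : A -> R) : sL f nil = 0. Proof. reflexivity. Qed.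
Lemma sL_cons {A} (f : A -> R) x l : sL f (x :: l) = f x + sL f l. Proof. reflexivity. Qed.
Lemma sL_app {A} (f : A -> R) l1 l2 : sL f (l1 ++ l2) = sL f l1 + sL f l2.
Proof. induction l1; simpl; [unfold sL; simpl; ring|]. rewrite !sL_cons, IHl1; ring. Qed.

Lemma sL_le {A} (f g : A -> R) l : (forall x, In x l -> f x <= g x) -> sL f l <= sL g l.
Proof. induction l; intros H; [unfold sL; simpl; lra|]. rewrite !sL_cons. pose proof (H a (or_introl eq_refl)).
  assert (sL f l <= sL g l) by (apply IHl; intros; apply H; right; auto). lra. Qed.

Lemma sL_nonneg {A} (f : A -> R) l : (forall x, In x l -> 0 <= f x) -> 0 <= sL f l.
Proof. intros H. replace 0 with (sL (fun _ => 0) l). apply sL_le; auto. induction l; auto. rewrite sL_cons, IHl; auto; [ring|intros; apply H; right; auto]. Qed.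

Lemma sL_plus {A} (f g : A -> R) l : sL (fun x => f x + g x) l = sL f l + sL g l.
Proof. induction l; [unfold sL; simpl; ring|]. rewrite !sL_cons, IHl; ring. Qed.

Lemma sL_scal {A} c (f : A -> R) l : sL (fun x => c * f x) l = c * sL f l.
Proof. induction l; [unfold sL; simpl; ring|]. rewrite !sL_cons, IHl; ring. Qed.

Lemma sL_ext {A} (f g : A -> R) l : (forall x, In x l -> f x = g x) -> sL f l = sL g l.
Proof. intros H; apply Rle_antisym; apply sL_le; intros x Hx; rewrite H; auto; lra. Qed.

Lemma sL_const {A} c (l : list A) : sL (fun _ => c) l = INR (length l) * c.
Proof. induction l; [unfold sL; simpl; ring|]. rewrite sL_cons, IHl; simpl length; rewrite S_INR; ring. Qed.

Lemma sL_elem {A} (f : A -> R) l x : In x l -> (forall y, In y l -> 0 <= f y) -> f x <= sL f l.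
Proof.
  intros Hx Hp. apply in_split in Hx as [l1 [l2 ->]]. rewrite sL_app, sL_cons.
  assert (0 <= sL f l1) by (apply sL_nonneg; intros; apply Hp; apply in_or_app; auto).
  assert (0 <= sL f l2) by (apply sL_nonneg; intros; apply Hp; apply in_or_app; right; right; auto). lra.
Qed.

Lemma sum_f_R0_sL g n : sum_f_R0 g n = sL g (seq 0 (S n)).
Proof. induction n. unfold sL; simpl; ring. rewrite seq_S, sL_app, <- IHn. simpl. unfold sL; simpl; ring. Qed.

Lemma sL_sub_le {A} (f : A -> R) l W : NoDup l -> incl l W -> (forall x, In x W -> 0 <= f x) -> sL f l <= sL f W.
Proof.
  revert W; induction l as [|x l IH]; intros W Hn Hi Hp.
  - rewrite sL_nil; apply sL_nonneg; auto.
  - assert (Hx: In x W) by (apply Hi; left; auto).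
    apply in_split in Hx as [W1 [W2 ->]]. rewrite sL_app, !sL_cons.
    inversion Hn; subst.
    assert (sL f l <= sL f (W1 ++ W2)).
    { apply IH; auto.
      - intros y Hy. assert (Hy' := Hi y (or_intror Hy)). apply in_app_or in Hy' as [H|[H|H]]; apply in_or_app; auto. subst; contradiction.
      - intros y Hy; apply Hp; apply in_app_or in Hy as [H|H]; apply in_or_app; auto; right; right; auto. }
    rewrite sL_app in H. lra.
Qed.

Lemma sL_sub_eq {A} (f : A -> R) l W : NoDup l -> NoDup W -> incl l W ->
  (forall y, In y W -> ~ In y l -> f y = 0) -> sL f W = sL f l.
Proof.
  revert W; induction l as [|x l IH]; intros W Hn HW Hi Hz.
  - rewrite sL_nil. rewrite (sL_ext f (fun _ => 0)). rewrite sL_const; ring. intros y Hy; apply Hz; auto.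
  - assert (Hx: In x W) by (apply Hi; left; auto).
    apply in_split in Hx as [W1 [W2 ->]]. rewrite sL_app, !sL_cons.
    inversion Hn; subst. apply NoDup_remove in HW as [HW1 HW2].
    rewrite <- (IH (W1 ++ W2)); auto. rewrite sL_app; ring.
    + intros y Hy. assert (Hy' := Hi y (or_intror Hy)). apply in_app_or in Hy' as [H|[H|H]]; apply in_or_app; auto. subst; contradiction.
    + intros y Hy Hnl. apply Hz. apply in_app_or in Hy as [H|H]; apply in_or_app; auto; right; right; auto.
      intros [->|H]; [contradiction|contradiction].
Qed.

Lemma sL_le_length {A} (f : A -> R) c l : (forall x, In x l -> f x <= c) -> sL f l <= INR (length l) * c.
Proof. intros H. rewrite <- sL_const. apply sL_le; auto. Qed.

Lemma sL_big {A} (f : A -> R) l : l <> nil -> 1 <= sL f l -> exists x, In x l /\ / INR (length l) <= f x.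
Proof.
  intros Hne H1. destruct (Classical_Prop.classic (exists x, In x l /\ / INR (length l) <= f x)) as [|Hn]; auto.
  exfalso. assert (Hlt: forall x, In x l -> f x < / INR (length l)).
  { intros x Hx. apply Rnot_le_lt. intros Hc; apply Hn; eauto. }
  assert (Hpos: 0 < INR (length l)) by (apply lt_0_INR; destruct l; simpl; [congruence|lia]).
  destruct l as [|a l]; [congruence|].
  assert (sL f l <= INR (length l) * / INR (length (a :: l))) by (apply sL_le_length; intros; apply Rlt_le, Hlt; right; auto).
  rewrite sL_cons in H1. assert (f a < / INR (length (a::l))) by (apply Hlt; left; auto).
  simpl length in *. rewrite S_INR in *.
  assert (INR (length l) * / (INR (length l) + 1) + / (INR (length l) + 1) = 1) by (field; lra). lra.
Qed.

Definition Wd (K : nat) : list Z := map (fun n => Z.of_nat n - Z.of_nat K)%Z (seq 0 (S (2*K))).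

Lemma In_Wd K j : In j (Wd K) <-> (- Z.of_nat K <= j <= Z.of_nat K)%Z.
Proof.
  unfold Wd; rewrite in_map_iff. split.
  - intros [n [<- Hn]]. apply in_seq in Hn. lia.
  - intros H. exists (Z.to_nat (j + Z.of_nat K)). rewrite Z2Nat.id by lia. split; [lia|]. apply in_seq. lia.
Qed.

Lemma NoDup_Wd K : NoDup (Wd K).
Proof. unfold Wd. apply NoDup_map_NoDup_ForallPairs. intros x y _ _ H; lia. apply seq_NoDup. Qed.

Lemma length_Wd K : length (Wd K) = S (2 * K).
Proof. unfold Wd; rewrite length_map, length_seq; auto. Qed.

Lemma partial_S_Wd mu q m K : partial_S mu q m K = sL (term mu q m) (Wd K).
Proof. unfold partial_S, Wd. rewrite sum_f_R0_sL. unfold sL. rewrite map_map. reflexivity. Qed.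


Lemma rpow_pos x q : 0 < x -> rpow x q = Rpower x q.
Proof. intros H; unfold rpow; destruct (Rlt_dec 0 x); [auto|lra]. Qed.
Lemma rpow_npos x q : x <= 0 -> rpow x q = 0.
Proof. intros H; unfold rpow; destruct (Rlt_dec 0 x); [lra|auto]. Qed.
Lemma Rpower_pos x q : 0 < Rpower x q.
Proof. unfold Rpower; apply exp_pos. Qed.
Lemma rpow_nonneg x q : 0 <= rpow x q.
Proof. unfold rpow; destruct (Rlt_dec 0 x); [apply Rlt_le, Rpower_pos|lra]. Qed.
Lemma rpow_gt0 x q : 0 < x -> 0 < rpow x q.
Proof. intros; rewrite rpow_pos; auto; apply Rpower_pos. Qed.

Lemma exp_le x y : x <= y -> exp x <= exp y.
Proof. intros [H|H]; [left; apply exp_increasing; auto|subst; lra]. Qed.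
Lemma ln_le x y : 0 < x -> x <= y -> ln x <= ln y.
Proof. intros Hx [H|H]; [left; apply ln_increasing; auto|subst; lra]. Qed.

Lemma rpow_le1 x q : x <= 1 -> 0 < q -> rpow x q <= 1.
Proof.
  intros H1 Hq. destruct (Rlt_dec 0 x) as [Hx|Hx]; [|rewrite rpow_npos; lra].
  rewrite rpow_pos by auto. unfold Rpower. rewrite <- exp_0. apply exp_le.
  assert (ln x <= 0). { rewrite <- ln_1. destruct (Req_dec x 1); [subst; lra|]. left; apply ln_increasing; lra. } nra.
Qed.

Lemma rpow_mono a b q : 0 <= a <= b -> 0 <= q -> rpow a q <= rpow b q.
Proof.
  intros H Hq. destruct (Rlt_dec 0 a) as [Ha|Ha]; [|rewrite (rpow_npos a) by lra; apply rpow_nonneg].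
  rewrite !rpow_pos by lra. apply Rle_Rpower_l; lra.
Qed.

Lemma rpow_rpow x a b : rpow (rpow x a) b = rpow x (a * b).
Proof.
  destruct (Rlt_dec 0 x) as [Hx|Hx].
  - rewrite (rpow_pos x a), rpow_pos, rpow_pos, Rpower_mult by (auto; apply Rpower_pos); auto.
  - rewrite (rpow_npos x) by lra. rewrite !rpow_npos; lra.
Qed.

Lemma rpow_add x a b : rpow x (a + b) = rpow x a * rpow x b.
Proof.
  destruct (Rlt_dec 0 x) as [Hx|Hx].
  - rewrite !rpow_pos by auto. apply Rpower_plus.
  - rewrite !rpow_npos by lra; ring.
Qed.

Lemma rpow_div a c q : 0 < c -> rpow (a / c) q = rpow a q / rpow c q.
Proof.
  intros Hc. destruct (Rlt_dec 0 a) as [Ha|Ha].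
  - rewrite !rpow_pos by (auto; apply Rdiv_lt_0_compat; auto). unfold Rpower.
    unfold Rdiv. rewrite ln_mult, ln_Rinv by (auto; apply Rinv_0_lt_compat; auto).
    rewrite Rmult_plus_distr_l, exp_plus. rewrite <- Ropp_mult_distr_r, exp_Ropp. reflexivity.
  - assert (0 < / c) by (apply Rinv_0_lt_compat; auto).
    rewrite (rpow_npos a) by lra. rewrite rpow_npos. unfold Rdiv; ring. unfold Rdiv; nra.
Qed.

Lemma exp_convex s t l : 0 < l < 1 -> exp (l * s + (1 - l) * t) <= l * exp s + (1 - l) * exp t.
Proof.
  intros Hl. set (c := l * s + (1 - l) * t).
  assert (E1: exp s = exp c * exp (s - c)) by (rewrite <- exp_plus; f_equal; ring).
  assert (E2: exp t = exp c * exp (t - c)) by (rewrite <- exp_plus; f_equal; ring).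
  pose proof (exp_ineq1_le (s - c)). pose proof (exp_ineq1_le (t - c)). pose proof (exp_pos c).
  rewrite E1, E2.
  assert (l * (exp c * exp (s - c)) + (1 - l) * (exp c * exp (t - c)) >= exp c * (l * (1 + (s - c)) + (1 - l) * (1 + (t - c)))).
  { assert (0 <= l * exp c * (exp (s - c) - (1 + (s - c)))) by (apply Rmult_le_pos; [apply Rmult_le_pos|]; lra).
    assert (0 <= (1 - l) * exp c * (exp (t - c) - (1 + (t - c)))) by (apply Rmult_le_pos; [apply Rmult_le_pos|]; lra).
    nra. }
  replace (l * (1 + (s - c)) + (1 - l) * (1 + (t - c))) with 1 in H2 by (unfold c; ring). lra.
Qed.

Lemma young a b l : 0 <= a -> 0 <= b -> 0 < l < 1 -> rpow a l * rpow b (1 - l) <= l * a + (1 - l) * b.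
Proof.
  intros Ha Hb Hl. destruct (Rlt_dec 0 a) as [Ha'|Ha']; [|rewrite (rpow_npos a) by lra; nra].
  destruct (Rlt_dec 0 b) as [Hb'|Hb']; [|rewrite (rpow_npos b) by lra; nra].
  rewrite !rpow_pos by auto. unfold Rpower. rewrite <- exp_plus.
  rewrite <- (exp_ln a) at 2 by auto. rewrite <- (exp_ln b) at 2 by auto.
  apply exp_convex; auto.
Qed.

Lemma sL_zero_elem {A} (f : A -> R) l x : In x l -> (forall y, In y l -> 0 <= f y) -> sL f l = 0 -> f x = 0.
Proof. intros Hx Hp Hs. pose proof (sL_elem f l x Hx Hp). pose proof (Hp x Hx). lra. Qed.

Lemma holder {A} (u v : A -> R) l lam : (forall x, 0 <= u x) -> (forall x, 0 <= v x) -> 0 < lam < 1 ->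
  sL (fun x => rpow (u x) lam * rpow (v x) (1 - lam)) l <= rpow (sL u l) lam * rpow (sL v l) (1 - lam).
Proof.
  intros Hu Hv Hl.
  assert (Pu: 0 <= sL u l) by (apply sL_nonneg; auto).
  assert (Pv: 0 <= sL v l) by (apply sL_nonneg; auto).
  pose proof (rpow_nonneg (sL u l) lam). pose proof (rpow_nonneg (sL v l) (1-lam)).
  destruct (Req_dec (sL u l) 0) as [Z|Zu].
  { rewrite (sL_ext _ (fun _ => 0)). rewrite sL_const. nra.
    intros x Hx. rewrite (rpow_npos (u x)); [ring|]. rewrite (sL_zero_elem u l x); auto; lra. }
  destruct (Req_dec (sL v l) 0) as [Z|Zv].
  { rewrite (sL_ext _ (fun _ => 0)). rewrite sL_const. nra.
    intros x Hx. rewrite (rpow_npos (v x)); [ring|]. rewrite (sL_zero_elem v l x); auto; lra. }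
  set (U := sL u l) in *. set (V := sL v l) in *.
  assert (HU: 0 < U) by lra. assert (HV: 0 < V) by lra.
  set (P := rpow U lam * rpow V (1 - lam)).
  assert (HP: 0 < P) by (unfold P; apply Rmult_lt_0_compat; apply rpow_gt0; auto).
  apply Rle_trans with (sL (fun x => P * (lam / U * u x + (1 - lam) / V * v x)) l).
  - apply sL_le. intros x _.
    assert (Y := young (u x / U) (v x / V) lam).
    rewrite !rpow_div in Y by auto.
    assert (0 <= u x / U) by (apply Rmult_le_pos; [auto|left; apply Rinv_0_lt_compat; auto]).
    assert (0 <= v x / V) by (apply Rmult_le_pos; [auto|left; apply Rinv_0_lt_compat; auto]).
    specialize (Y H1 H2 Hl).
    assert (E: rpow (u x) lam * rpow (v x) (1 - lam) = P * (rpow (u x) lam / rpow U lam * (rpow (v x) (1 - lam) / rpow V (1 - lam)))).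
    { unfold P. field. split; apply Rgt_not_eq, rpow_gt0; auto. }
    rewrite E. apply Rmult_le_compat_l; [lra|]. unfold Rdiv in *. lra.
  - rewrite sL_scal, sL_plus, !sL_scal. fold U V. replace (lam / U * U + (1 - lam) / V * V) with 1 by (field; lra). lra.
Qed.


Lemma div_le_iff p a x : 0 < p -> (a / p <= x <-> a <= x * p).
Proof.
  intros Hp; split; intro H.
  - replace a with (a / p * p) by (field; lra). apply Rmult_le_compat_r; lra.
  - replace x with (x * p / p) by (field; lra). unfold Rdiv; apply Rmult_le_compat_r; [left; apply Rinv_0_lt_compat; lra|auto].
Qed.
Lemma lt_div_iff p a x : 0 < p -> (x < a / p <-> x * p < a).
Proof.
  intros Hp; split; intro H.
  - replace a with (a / p * p) by (field; lra). apply Rmult_lt_compat_r; lra.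
  - replace x with (x * p / p) by (field; lra). unfold Rdiv; apply Rmult_lt_compat_r; [apply Rinv_0_lt_compat; lra|auto].
Qed.

Lemma pow2_pos m : 0 < 2 ^ m.
Proof. apply pow_lt; lra. Qed.
Lemma pow2_ge1 m : 1 <= 2 ^ m.
Proof. induction m; simpl; lra. Qed.

Definition Km (B : R) (m : nat) : nat := Z.to_nat (up (B * 2 ^ m)).

Lemma Km_spec B m : 0 <= B -> B * 2 ^ m < INR (Km B m) /\ INR (Km B m) <= B * 2 ^ m + 1
  /\ IZR (Z.of_nat (Km B m)) = IZR (up (B * 2 ^ m)).
Proof.
  intros HB. pose proof (pow2_pos m). destruct (archimed (B * 2 ^ m)) as [H1 H2].
  assert (Hp: (0 <= up (B * 2 ^ m))%Z) by (apply le_IZR; nra).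
  unfold Km. rewrite INR_IZR_INZ, Z2Nat.id by auto. repeat split; lra.
Qed.

Lemma dyadic_disj m i j x : dyadic m i x -> dyadic m j x -> i = j.
Proof.
  unfold dyadic; intros [H1 H2] [H3 H4]. pose proof (pow2_pos m).
  apply div_le_iff in H1, H3; auto. apply Rmult_lt_compat_r with (r := 2^m) in H2, H4; auto.
  replace ((IZR j + 1) / 2 ^ m * 2 ^ m) with (IZR j + 1) in H4 by (field; lra).
  replace ((IZR i + 1) / 2 ^ m * 2 ^ m) with (IZR i + 1) in H2 by (field; lra).
  assert (IZR i < IZR (j + 1)) by (rewrite plus_IZR; lra).
  assert (IZR j < IZR (i + 1)) by (rewrite plus_IZR; lra).
  apply lt_IZR in H0, H5. lia.
Qed.

Lemma zero_outside mu M m j : is_borel_prob_measure mu -> mu (fun x => M < Rabs x) = 0 ->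
  (Z.of_nat (Km (Rabs M) m) < Z.abs j)%Z -> mu (dyadic m j) = 0.
Proof.
  intros Hm HM Hj. apply Rle_antisym; [|apply mu_pos; auto; apply borel_dyadic].
  rewrite <- HM. apply mu_mono; auto. apply borel_dyadic. apply borel_abs.
  pose proof (Rabs_pos M) as HB. destruct (Km_spec (Rabs M) m HB) as [K1 [K2 K3]].
  pose proof (pow2_pos m). pose proof (Rle_abs M).
  intros x [H1 H2]. apply div_le_iff in H1; auto. apply lt_div_iff in H2; auto.
  destruct (Z.abs_spec j) as [[Hj0 Ha]|[Hj0 Ha]]; rewrite Ha in Hj.
  - assert (Hle: IZR (Z.of_nat (Km (Rabs M) m) + 1) <= IZR j) by (apply IZR_le; lia).
    rewrite plus_IZR, <- INR_IZR_INZ in Hle. assert (x * 2^m > Rabs M * 2^m) by lra.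
    assert (x > Rabs M) by nra. rewrite Rabs_right; lra.
  - assert (IZR j + 1 <= - IZR (Z.of_nat (Km (Rabs M) m))) by (rewrite <- opp_IZR, <- plus_IZR; apply IZR_le; lia).
    rewrite <- INR_IZR_INZ in H3. assert (x * 2^m < - (Rabs M * 2^m)) by lra.
    assert (x < - Rabs M) by nra. rewrite Rabs_left; lra.
Qed.

Definition Sm mu M q m := sL (fun j => rpow (mu (dyadic m j)) q) (Wd (Km (Rabs M) m)).

Lemma S_sum_eq mu M q m : is_borel_prob_measure mu -> mu (fun x => M < Rabs x) = 0 ->
  S_sum mu q m = Sm mu M q m.
Proof.
  intros Hm HM.
  assert (Hc: Un_cv (partial_S mu q m) (Sm mu M q m)).
  { intros e He. exists (Km (Rabs M) m). intros n Hn.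
    rewrite partial_S_Wd. unfold Sm.
    change (term mu q m) with (fun j => rpow (mu (dyadic m j)) q).
    rewrite (sL_sub_eq _ (Wd (Km (Rabs M) m)) (Wd n)).
    - unfold Rdist. rewrite Rminus_diag, Rabs_R0; lra.
    - apply NoDup_Wd.
    - apply NoDup_Wd.
    - intros j Hj. rewrite In_Wd in *. lia.
    - intros j Hj Hn'. rewrite In_Wd in *. rewrite (zero_outside mu M m j); auto.
      apply rpow_npos; lra. lia. }
  assert (Hs: Un_cv (partial_S mu q m) (S_sum mu q m)) by (unfold S_sum; apply epsilon_spec; eauto).
  eapply UL_sequence; eauto.
Qed.


Lemma mass_window mu M m : is_borel_prob_measure mu -> mu (fun x => M < Rabs x) = 0 ->
  1 <= sL (fun j => mu (dyadic m j)) (Wd (Km (Rabs M) m)).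
Proof.
  intros Hm HM. set (K := Km (Rabs M) m).
  set (F := fun n : nat => if Nat.leb n (2 * K) then dyadic m (Z.of_nat n - Z.of_nat K) else (fun _ : R => False)).
  assert (HF: forall n, borel (F n)). { intros n; unfold F; destruct (Nat.leb n (2*K)); [apply borel_dyadic|apply borel_empty]. }
  assert (HD: forall i j x, i <> j -> F i x -> F j x -> False).
  { intros i j x Hij; unfold F. destruct (Nat.leb i (2*K)); [|tauto]. destruct (Nat.leb j (2*K)); [|tauto].
    intros H1 H2. pose proof (dyadic_disj _ _ _ _ H1 H2). lia. }
  pose proof Hm as [_ [_ [_ Hc]]]. specialize (Hc F HF HD).
  assert (Hs: infinite_sum (fun n => mu (F n)) (sum_f_R0 (fun n => mu (F n)) (2 * K))).
  { apply infinite_sum_eventually. intros n Hn. unfold F. replace (Nat.leb n (2*K)) with false. apply mu_empty; auto.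
    symmetry; apply Nat.leb_gt; lia. }
  pose proof (uniqueness_sum _ _ _ Hc Hs) as E.
  assert (E2: sum_f_R0 (fun n => mu (F n)) (2 * K) = sL (fun j => mu (dyadic m j)) (Wd K)).
  { rewrite sum_f_R0_sL. unfold sL, Wd. rewrite map_map. f_equal. apply map_ext_in.
    intros n Hn. apply in_seq in Hn. unfold F. replace (Nat.leb n (2*K)) with true; auto. symmetry; apply Nat.leb_le; lia. }
  rewrite <- E2, <- E.
  assert (Hb: borel (fun x => ~ M < Rabs x)) by (constructor; apply borel_abs).
  pose proof (mu_compl mu _ Hm (borel_abs M)) as Hco. rewrite HM in Hco.
  rewrite <- Hco, Rplus_0_l. apply mu_mono; auto. constructor; auto.
  intros x Hx. apply Rnot_lt_le in Hx.
  pose proof (Rabs_pos M) as HB. destruct (Km_spec (Rabs M) m HB) as [K1 [K2 K3]]. fold K in K1, K2, K3.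
  pose proof (pow2_pos m). pose proof (Rle_abs M).
  set (y := x * 2 ^ m). destruct (archimed y) as [A1 A2].
  set (j := (up y - 1)%Z).
  assert (Hj1: IZR j <= y) by (unfold j; rewrite minus_IZR; lra).
  assert (Hj2: y < IZR j + 1) by (unfold j; rewrite minus_IZR; lra).
  assert (Hxb: - Rabs M <= x <= Rabs M) by (unfold Rabs at 1 in Hx; destruct (Rcase_abs x); lra).
  assert (Hy: - (Rabs M * 2^m) <= y <= Rabs M * 2^m) by (unfold y; split; nra).
  rewrite INR_IZR_INZ in K1.
  assert (Hj3: (j < Z.of_nat K)%Z) by (apply lt_IZR; lra).
  assert (Hj4: (- Z.of_nat K - 1 < j)%Z) by (apply lt_IZR; rewrite minus_IZR, opp_IZR; lra).
  exists (Z.to_nat (j + Z.of_nat K)). unfold F.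
  replace (Nat.leb (Z.to_nat (j + Z.of_nat K)) (2 * K)) with true by (symmetry; apply Nat.leb_le; lia).
  rewrite Z2Nat.id by lia. replace (j + Z.of_nat K - Z.of_nat K)%Z with j by lia.
  unfold dyadic. split; [apply div_le_iff|apply lt_div_iff]; auto.
Qed.


Definition aseq mu q (m : nat) : R := - (/ INR m) * log2 (S_sum mu q m).

Lemma ln2_pos : 0 < ln 2.
Proof. rewrite <- ln_1. apply ln_increasing; lra. Qed.

Lemma log2_le x y : 0 < x -> x <= y -> log2 x <= log2 y.
Proof. intros; unfold log2, Rdiv. apply Rmult_le_compat_r. left; apply Rinv_0_lt_compat, ln2_pos. apply ln_le; auto. Qed.

Lemma log2_mult x y : 0 < x -> 0 < y -> log2 (x * y) = log2 x + log2 y.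
Proof. intros; unfold log2. rewrite ln_mult; auto. field. apply Rgt_not_eq, ln2_pos. Qed.

Lemma log2_pow2 m : log2 (2 ^ m) = INR m.
Proof. unfold log2. rewrite ln_pow by lra. field. apply Rgt_not_eq, ln2_pos. Qed.

Lemma log2_Rpower x q : 0 < x -> log2 (Rpower x q) = q * log2 x.
Proof. intros; unfold log2. rewrite ln_Rpower. unfold Rdiv; ring. Qed.

Lemma log2_inv x : 0 < x -> log2 (/ x) = - log2 x.
Proof. intros; unfold log2. rewrite ln_Rinv; auto. unfold Rdiv; ring. Qed.

Lemma Wd_ne K : Wd K <> nil.
Proof. unfold Wd. simpl. discriminate. Qed.

Lemma Sm_bounds mu M q m : is_borel_prob_measure mu -> mu (fun x => M < Rabs x) = 0 -> 0 < q ->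
  let N := INR (S (2 * Km (Rabs M) m)) in
  rpow (/ N) q <= Sm mu M q m /\ Sm mu M q m <= N /\ 0 < N /\ N <= (2 * Rabs M + 3) * 2 ^ m.
Proof.
  intros Hm HM Hq N.
  assert (HN: 0 < N) by (unfold N; apply lt_0_INR; lia).
  pose proof (mass_window mu M m Hm HM) as Hw.
  destruct (sL_big _ _ (Wd_ne _) Hw) as [j [Hj Hbig]].
  rewrite length_Wd in Hbig. fold N in Hbig.
  split; [|split; [|split]]; auto.
  - apply Rle_trans with (rpow (mu (dyadic m j)) q).
    + apply rpow_mono; [split; auto; left; apply Rinv_0_lt_compat; auto|lra].
    + unfold Sm. apply (sL_elem (fun j => rpow (mu (dyadic m j)) q)); auto. intros; apply rpow_nonneg.
  - unfold Sm. replace N with (INR (length (Wd (Km (Rabs M) m))) * 1) by (rewrite length_Wd; fold N; ring).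
    apply sL_le_length. intros y _. apply rpow_le1; auto. apply mu_le1; auto. apply borel_dyadic.
  - pose proof (Rabs_pos M) as HB. destruct (Km_spec (Rabs M) m HB) as [K1 [K2 K3]].
    unfold N. rewrite S_INR, mult_INR. simpl (INR 2). pose proof (pow2_ge1 m). nra.
Qed.

Lemma aseq_bounds mu M q m : is_borel_prob_measure mu -> mu (fun x => M < Rabs x) = 0 -> 0 < q -> (1 <= m)%nat ->
  - 1 - log2 (2 * Rabs M + 3) <= aseq mu q m <= q * (1 + log2 (2 * Rabs M + 3)).
Proof.
  intros Hm HM Hq Hm1. destruct (Sm_bounds mu M q m Hm HM Hq) as [S1 [S2 [S3 S4]]].
  set (N := INR (S (2 * Km (Rabs M) m))) in *.
  unfold aseq. rewrite (S_sum_eq mu M) by auto. set (S := Sm mu M q m) in *.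
  set (L := log2 (2 * Rabs M + 3)).
  assert (HL: 0 <= L). { unfold L. rewrite <- (Rmult_0_l (/ ln 2)). unfold log2, Rdiv. apply Rmult_le_compat_r.
     left; apply Rinv_0_lt_compat, ln2_pos. rewrite <- ln_1. apply ln_le; pose proof (Rabs_pos M); lra. }
  assert (Hr: 0 < rpow (/ N) q) by (apply rpow_gt0, Rinv_0_lt_compat; auto).
  assert (HS: 0 < S) by lra.
  assert (U: log2 S <= L + INR m).
  { apply Rle_trans with (log2 N). apply log2_le; auto.
    rewrite <- log2_pow2. unfold L. rewrite <- log2_mult by (pose proof (Rabs_pos M); pose proof (pow2_pos m); lra).
    apply log2_le; auto. }
  assert (Lo: - q * (L + INR m) <= log2 S).
  { apply Rle_trans with (log2 (rpow (/ N) q)); [|apply log2_le; auto].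
    rewrite rpow_pos, log2_Rpower, log2_inv by (auto; apply Rinv_0_lt_compat; auto).
    assert (log2 N <= L + INR m).
    { rewrite <- log2_pow2. unfold L. rewrite <- log2_mult by (pose proof (Rabs_pos M); pose proof (pow2_pos m); lra).
      apply log2_le; auto. }
    nra. }
  assert (Hm1': 1 <= INR m) by (apply (le_INR 1); auto).
  assert (Hi: 0 < / INR m <= 1). { split. apply Rinv_0_lt_compat; lra. rewrite <- Rinv_1. apply Rinv_le_contravar; lra. }
  assert (Hii: / INR m * INR m = 1) by (field; lra).
  assert (P1: 0 <= / INR m * (L + INR m - log2 S)) by (apply Rmult_le_pos; lra).
  assert (P2: 0 <= (1 - / INR m) * L) by (apply Rmult_le_pos; lra).
  assert (P3: 0 <= / INR m * (log2 S + q * (L + INR m))) by (apply Rmult_le_pos; lra).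
  assert (P4: 0 <= q * ((1 - / INR m) * L)) by (apply Rmult_le_pos; lra).
  split; nra.
Qed.


Lemma liminf_exists (a : nat -> R) lo hi : (forall m, (1 <= m)%nat -> lo <= a m <= hi) -> exists t, is_liminf a t.
Proof.
  intros Hb. destruct (Lim_seq.ex_LimInf_seq a) as [[t| |] Ht]; simpl in Ht.
  - exists t. split.
    + intros e He. destruct (Ht (mkposreal e He)) as [_ [N HN]]. exists N. intros n Hn. apply HN; auto.
    + intros e He N. destruct (Ht (mkposreal e He)) as [H _]. apply H.
  - exfalso. destruct (Ht hi) as [N HN]. specialize (HN (S N) (Nat.le_succ_diag_r N)). specialize (Hb (S N) ltac:(lia)). lra.
  - exfalso. destruct (Ht lo 1%nat) as [n [Hn Hl]]. specialize (Hb n Hn). lra.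
Qed.

Lemma tau_spec mu M q : is_borel_prob_measure mu -> mu (fun x => M < Rabs x) = 0 -> 0 < q ->
  is_liminf (aseq mu q) (tau mu q).
Proof.
  intros Hm HM Hq. unfold tau, Rliminf. change (fun m => - (/ INR m) * log2 (S_sum mu q m)) with (aseq mu q).
  apply epsilon_spec. eapply liminf_exists. intros m Hm1. apply (aseq_bounds mu M q m); auto.
Qed.


Lemma div_lt1 a p : 0 < p -> a < p -> a / p < 1.
Proof. intros Hp H. replace 1 with (p / p) by (field; lra). unfold Rdiv. apply Rmult_lt_compat_r; auto. apply Rinv_0_lt_compat; auto. Qed.

Lemma Sm_pos mu M q m : is_borel_prob_measure mu -> mu (fun x => M < Rabs x) = 0 -> 0 < q -> 0 < Sm mu M q m.
Proof.
  intros Hm HM Hq. destruct (Sm_bounds mu M q m Hm HM Hq) as [S1 [_ [S3 _]]].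
  eapply Rlt_le_trans; [|apply S1]. apply rpow_gt0, Rinv_0_lt_compat; auto.
Qed.

Lemma aseq_concave mu M x y z m : is_borel_prob_measure mu -> mu (fun x => M < Rabs x) = 0 ->
  0 < x < y -> y < z -> (1 <= m)%nat ->
  (z - y) / (z - x) * aseq mu x m + (1 - (z - y) / (z - x)) * aseq mu z m <= aseq mu y m.
Proof.
  intros Hm HM Hxy Hyz Hm1. set (l := (z - y) / (z - x)).
  assert (Hl: 0 < l < 1). { unfold l; split. apply Rdiv_lt_0_compat; lra. apply div_lt1; lra. }
  assert (Ey: y = x * l + z * (1 - l)) by (unfold l; field; lra).
  unfold aseq. rewrite !(S_sum_eq mu M) by auto.
  assert (Hx: 0 < Sm mu M x m) by (apply Sm_pos; auto; lra).
  assert (Hz: 0 < Sm mu M z m) by (apply Sm_pos; auto; lra).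
  assert (Hy: 0 < Sm mu M y m) by (apply Sm_pos; auto; lra).
  assert (Hh: Sm mu M y m <= rpow (Sm mu M x m) l * rpow (Sm mu M z m) (1 - l)).
  { unfold Sm. rewrite <- holder by (auto; intros; apply rpow_nonneg).
    apply Req_le, sL_ext. intros j _. rewrite !rpow_rpow, <- rpow_add, <- Ey. reflexivity. }
  apply log2_le in Hh; auto.
  rewrite log2_mult, !rpow_pos, !log2_Rpower in Hh by (auto; apply rpow_gt0; auto).
  assert (Hm1': 1 <= INR m) by (apply (le_INR 1); auto).
  assert (Hi: 0 < / INR m) by (apply Rinv_0_lt_compat; lra).
  assert (0 <= / INR m * (l * log2 (Sm mu M x m) + (1 - l) * log2 (Sm mu M z m) - log2 (Sm mu M y m))) by (apply Rmult_le_pos; lra).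
  nra.
Qed.

Lemma tau_concave mu M x y z : is_borel_prob_measure mu -> mu (fun x => M < Rabs x) = 0 ->
  0 < x < y -> y < z ->
  (z - y) / (z - x) * tau mu x + (1 - (z - y) / (z - x)) * tau mu z <= tau mu y.
Proof.
  intros Hm HM Hxy Hyz. set (l := (z - y) / (z - x)).
  assert (Hl: 0 < l < 1). { unfold l; split. apply Rdiv_lt_0_compat; lra. apply div_lt1; lra. }
  destruct (tau_spec mu M x Hm HM ltac:(lra)) as [Tx _].
  destruct (tau_spec mu M z Hm HM ltac:(lra)) as [Tz _].
  destruct (tau_spec mu M y Hm HM ltac:(lra)) as [_ Ty].
  apply Rnot_lt_le; intros Hc.
  set (e := (l * tau mu x + (1 - l) * tau mu z - tau mu y) / 3).
  assert (He: 0 < e) by (unfold e; lra).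
  destruct (Tx e He) as [N1 H1]. destruct (Tz e He) as [N2 H2].
  destruct (Ty e He (N1 + N2 + 1)%nat) as [n [Hn Hy]].
  specialize (H1 n ltac:(lia)). specialize (H2 n ltac:(lia)).
  pose proof (aseq_concave mu M x y z n Hm HM Hxy Hyz ltac:(lia)). fold l in H.
  assert (l * (tau mu x - e) <= l * aseq mu x n) by (apply Rmult_le_compat_l; lra).
  assert ((1 - l) * (tau mu z - e) <= (1 - l) * aseq mu z n) by (apply Rmult_le_compat_l; lra).
  unfold e in *. lra.
Qed.


Lemma tau_concave' mu M x y z : is_borel_prob_measure mu -> mu (fun x => M < Rabs x) = 0 ->
  0 < x < y -> y < z -> (z - y) * tau mu x + (y - x) * tau mu z <= (z - x) * tau mu y.
Proof.
  intros Hm HM H1 H2. pose proof (tau_concave mu M x y z Hm HM H1 H2) as C.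
  apply Rmult_le_compat_l with (r := z - x) in C; [|lra].
  replace ((z - x) * ((z - y) / (z - x) * tau mu x + (1 - (z - y) / (z - x)) * tau mu z))
    with ((z - y) * tau mu x + (y - x) * tau mu z) in C by (field; lra). auto.
Qed.

Lemma deriv_bounds f q0 a e : derivable_pt_lim f q0 a -> 0 < e ->
  exists d, 0 < d /\ forall h, 0 < h < d -> h * (a - e) < f (q0 + h) - f q0 < h * (a + e).
Proof.
  intros Hd He. destruct (Hd e He) as [[d Hdp] Hdd]. exists d. split; auto.
  intros h [Hh1 Hh2]. specialize (Hdd h ltac:(lra) ltac:(simpl; rewrite Rabs_right; lra)).
  apply Rabs_def2 in Hdd as [A1 A2].
  set (s := (f (q0 + h) - f q0) / h) in *.
  assert (E: f (q0 + h) - f q0 = h * s) by (unfold s; field; lra). rewrite E.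
  split; apply Rmult_lt_compat_l; lra.
Qed.

Lemma tau_tangent mu M q0 a q : is_borel_prob_measure mu -> mu (fun x => M < Rabs x) = 0 ->
  0 < q0 -> derivable_pt_lim (tau mu) q0 a -> 0 < q -> tau mu q <= tau mu q0 + a * (q - q0).
Proof.
  intros Hm HM Hq0 Hd Hq. apply Rnot_lt_le. intros Hc.
  set (D := tau mu q - tau mu q0 - a * (q - q0)). assert (HD: 0 < D) by (unfold D; lra).
  destruct (Rtotal_order q q0) as [Hlt|[Heq|Hgt]].
  - set (e := D / (2 * (q0 - q))). assert (He: 0 < e) by (unfold e; apply Rdiv_lt_0_compat; lra).
    destruct (deriv_bounds _ _ _ _ Hd He) as [d [Hdp Hb]].
    set (h := d / 2). assert (Hh: 0 < h < d) by (unfold h; lra).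
    specialize (Hb h Hh) as [B1 B2].
    pose proof (tau_concave' mu M q q0 (q0 + h) Hm HM ltac:(lra) ltac:(lra)) as C.
    assert (Ee: (q0 - q) * e = D / 2) by (unfold e; field; lra).
    assert (P: (q0 - q) * (h * (a - e)) <= (q0 - q) * (tau mu (q0 + h) - tau mu q0)) by (apply Rmult_le_compat_l; lra).
    assert (h * (tau mu q - tau mu q0) + (q0 - q) * (tau mu (q0 + h) - tau mu q0) <= 0) by lra.
    assert (HH: h * (tau mu q - tau mu q0) < h * (a * (q - q0) + D / 2)) by nra.
    apply Rmult_lt_reg_l in HH; [|lra]. unfold D in *; lra.
  - subst. unfold D in HD. replace (q0 - q0) with 0 in HD by ring. lra.
  - set (e := D / (2 * (q - q0))). assert (He: 0 < e) by (unfold e; apply Rdiv_lt_0_compat; lra).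
    destruct (deriv_bounds _ _ _ _ Hd He) as [d [Hdp Hb]].
    set (h := Rmin (d / 2) ((q - q0) / 2)).
    assert (Hh: 0 < h < d /\ h < q - q0).
    { pose proof (Rmin_l (d/2) ((q-q0)/2)). pose proof (Rmin_r (d/2) ((q-q0)/2)).
      assert (0 < h) by (unfold h; apply Rmin_glb_lt; lra). fold h in H, H0. lra. }
    destruct Hh as [Hh Hh'].
    specialize (Hb h Hh) as [B1 B2].
    pose proof (tau_concave' mu M q0 (q0 + h) q Hm HM ltac:(lra) ltac:(lra)) as C.
    assert (Ee: (q - q0) * e = D / 2) by (unfold e; field; lra).
    assert (P: (q - q0) * (tau mu (q0 + h) - tau mu q0) <= (q - q0) * (h * (a + e))) by (apply Rmult_le_compat_l; lra).
    assert (h * (tau mu q - tau mu q0) <= (q - q0) * (tau mu (q0 + h) - tau mu q0)) by lra.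
    assert (HH: h * (tau mu q - tau mu q0) <= h * (a * (q - q0) + D / 2)) by nra.
    apply Rmult_le_reg_l in HH; [|lra]. unfold D in *; lra.
Qed.


Lemma tau_star_le mu M q0 a : is_borel_prob_measure mu -> mu (fun x => M < Rabs x) = 0 ->
  0 < q0 -> derivable_pt_lim (tau mu) q0 a -> tau_star mu a <= a * q0 - tau mu q0.
Proof.
  intros Hm HM Hq0 Hd.
  set (E := fun y => exists q, 0 < q /\ y = a * q - tau mu q).
  assert (Hlow: forall y, E y -> a * q0 - tau mu q0 <= y).
  { intros y [q [Hq ->]]. pose proof (tau_tangent mu M q0 a q Hm HM Hq0 Hd Hq). lra. }
  assert (Hex: exists t, is_inf E t).
  { set (E' := fun y => E (- y)).
    assert (Hb: bound E'). { exists (- (a * q0 - tau mu q0)). intros y Hy. apply Hlow in Hy. lra. }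
    assert (Hne: exists x, E' x). { exists (- (a * q0 - tau mu q0)). unfold E'. rewrite Ropp_involutive. exists q0; auto. }
    destruct (completeness E' Hb Hne) as [m [Hm1 Hm2]].
    exists (- m). split.
    - intros x Hx. assert (E' (- x)) by (unfold E'; rewrite Ropp_involutive; auto). apply Hm1 in H. lra.
    - intros u Hu. assert (m <= - u). { apply Hm2. intros y Hy. apply Hu in Hy. lra. } lra. }
  assert (Hi: is_inf E (tau_star mu a)) by (unfold tau_star, Rinf; apply epsilon_spec; auto).
  destruct Hi as [Hi _]. apply Hi. exists q0; auto.
Qed.

Lemma list_bound (l : list Z) : exists K : nat, forall j, In j l -> (Z.abs j <= Z.of_nat K)%Z.
Proof.
  induction l as [|x l [K HK]]. exists O; intros j [].
  exists (Nat.max K (Z.to_nat (Z.abs x))). intros j [->|Hj]. lia. specialize (HK j Hj). lia.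
Qed.

Lemma Sm_big mu M q m K : is_borel_prob_measure mu -> mu (fun x => M < Rabs x) = 0 -> (Km (Rabs M) m <= K)%nat ->
  sL (fun j => rpow (mu (dyadic m j)) q) (Wd K) = Sm mu M q m.
Proof.
  intros Hm HM HK. unfold Sm. apply sL_sub_eq.
  - apply NoDup_Wd.
  - apply NoDup_Wd.
  - intros j Hj. rewrite In_Wd in *. lia.
  - intros j Hj Hn'. rewrite In_Wd in *. rewrite (zero_outside mu M m j); auto. apply rpow_npos; lra. lia.
Qed.

Lemma Rpower2_log2 x : 0 < x -> Rpower 2 (log2 x) = x.
Proof. intros Hx. unfold Rpower, log2. replace (ln x / ln 2 * ln 2) with (ln x). apply exp_ln; auto. field. apply Rgt_not_eq, ln2_pos. Qed.

Lemma rpow_Rpower2 X c : rpow (Rpower 2 X) c = Rpower 2 (X * c).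
Proof. rewrite rpow_pos by apply Rpower_pos. apply Rpower_mult. Qed.

Lemma rpow_one c : rpow 1 c = 1.
Proof. rewrite rpow_pos by lra. unfold Rpower. rewrite ln_1, Rmult_0_r. apply exp_0. Qed.


Theorem lemma3p9 (mu : (R -> Prop) -> R) (q0 alpha0 : R) :
  is_borel_prob_measure mu ->
  bounded_support mu ->
  1 < q0 ->
  derivable_pt_lim (tau mu) q0 alpha0 ->
  forall kappa : R, 0 < kappa ->
  exists eps : R, 0 < eps /\
  exists m0 : nat, forall m : nat, (m0 <= m)%nat ->
  forall Dp : list Z, NoDup Dp ->
  INR (length Dp) <= Rpower 2 ((tau_star mu alpha0 - kappa) * INR m) ->
  sum_list (map (fun j => rpow (mu (dyadic m j)) q0) Dp)
    <= Rpower 2 (- (tau mu q0 + eps) * INR m).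
Proof.
  intros Hm [M HM] Hq0 Hd kappa Hk.
  set (t0 := tau mu q0).
  set (th := kappa / (4 * q0)). assert (Hth: 0 < th) by (unfold th; apply Rdiv_lt_0_compat; lra).
  destruct (deriv_bounds _ _ _ _ Hd Hth) as [d [Hdp Hb]].
  set (dl := d / 2). assert (Hdl: 0 < dl < d) by (unfold dl; lra).
  set (q := q0 + dl).
  destruct (Hb dl Hdl) as [Bq _]. fold q t0 in Bq.
  set (eta := kappa * dl / (4 * q0)). assert (Heta: 0 < eta) by (unfold eta; apply Rdiv_lt_0_compat; nra).
  set (eps := kappa * dl / (2 * q)).
  exists eps. split. { unfold eps; apply Rdiv_lt_0_compat; unfold q; nra. }
  destruct (tau_spec mu M q Hm HM ltac:(unfold q; lra)) as [Tq _].
  destruct (Tq eta Heta) as [N HN].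
  exists (S N). intros m Hmm Dp HDp Hlen.
  pose proof (tau_star_le mu M q0 alpha0 Hm HM ltac:(lra) Hd) as Hts.
  set (ts := tau_star mu alpha0) in *. fold t0 in Hts |- *.
  set (lam := q0 / q).
  assert (Hq: 0 < q) by (unfold q; lra).
  assert (Hlam: 0 < lam < 1) by (unfold lam; split; [apply Rdiv_lt_0_compat; lra|apply div_lt1; unfold q; lra]).
  set (u := fun j => rpow (mu (dyadic m j)) q).
  change (sum_list (map (fun j => rpow (mu (dyadic m j)) q0) Dp)) with (sL (fun j => rpow (mu (dyadic m j)) q0) Dp).
  rewrite (sL_ext _ (fun j => rpow (u j) lam * rpow ((fun _ => 1) j) (1 - lam))).
  2:{ intros j _. unfold u. rewrite rpow_one, rpow_rpow, Rmult_1_r. f_equal. unfold lam; field; lra. }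
  eapply Rle_trans; [apply holder; auto; intros; [apply rpow_nonneg|lra]|].
  rewrite sL_const, Rmult_1_r.
  destruct (list_bound Dp) as [K HK].
  set (K2 := Nat.max K (Km (Rabs M) m)).
  assert (HU: sL u Dp <= Sm mu M q m).
  { rewrite <- (Sm_big mu M q m K2 Hm HM) by lia. apply sL_sub_le; auto.
    - intros j Hj. apply In_Wd. specialize (HK j Hj). lia.
    - intros; apply rpow_nonneg. }
  assert (HU0: 0 <= sL u Dp) by (apply sL_nonneg; intros; apply rpow_nonneg).
  assert (Hm1: 1 <= INR m) by (apply (le_INR 1); lia).
  specialize (HN m ltac:(lia)). unfold aseq in HN. rewrite (S_sum_eq mu M) in HN by auto.
  assert (HS: 0 < Sm mu M q m) by (apply Sm_pos; auto).
  assert (Hlog: log2 (Sm mu M q m) < - (tau mu q - eta) * INR m).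
  { assert (Hi: / INR m * INR m = 1) by (field; lra).
    assert (tau mu q - eta < - / INR m * log2 (Sm mu M q m)) by exact HN.
    assert ((tau mu q - eta) * INR m < (- / INR m * log2 (Sm mu M q m)) * INR m) by (apply Rmult_lt_compat_r; lra).
    replace ((- / INR m * log2 (Sm mu M q m)) * INR m) with (- log2 (Sm mu M q m)) in H0 by (field; lra). lra. }
  assert (HSb: Sm mu M q m <= Rpower 2 (- (tau mu q - eta) * INR m)).
  { rewrite <- (Rpower2_log2 (Sm mu M q m)) at 1 by auto. apply Rle_Rpower; lra. }
  assert (R1: rpow (sL u Dp) lam <= Rpower 2 (- (tau mu q - eta) * INR m * lam)).
  { rewrite <- rpow_Rpower2. apply rpow_mono; lra. }
  assert (R2: rpow (INR (length Dp)) (1 - lam) <= Rpower 2 ((ts - kappa) * INR m * (1 - lam))).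
  { rewrite <- rpow_Rpower2. apply rpow_mono; [split; [apply pos_INR|auto]|lra]. }
  eapply Rle_trans.
  { apply Rmult_le_compat; [apply rpow_nonneg|apply rpow_nonneg|apply R1|apply R2]. }
  rewrite <- Rpower_plus. apply Rle_Rpower; [lra|].
  assert (Hexp: - (tau mu q - eta) * lam + (ts - kappa) * (1 - lam) <= - (t0 + eps)).
  { replace (- (tau mu q - eta) * lam + (ts - kappa) * (1 - lam)) with ((- (tau mu q - eta) * q0 + (ts - kappa) * dl) / q)
      by (unfold lam, q; field; lra).
    apply div_le_iff; auto.
    assert (A1: dl * (alpha0 - th) * q0 <= (tau mu q - t0) * q0) by (apply Rmult_le_compat_r; lra).
    assert (A2: ts * dl <= (alpha0 * q0 - t0) * dl) by (apply Rmult_le_compat_r; lra).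
    assert (A3: th * q0 = kappa / 4) by (unfold th; field; lra).
    assert (A4: eta * q0 = kappa * dl / 4) by (unfold eta; field; lra).
    assert (A5: eps * q = kappa * dl / 2) by (unfold eps; field; lra).
    assert (A6: q = q0 + dl) by reflexivity.
    nra. }
  assert (0 <= INR m) by lra.
  replace (- (tau mu q - eta) * INR m * lam + (ts - kappa) * INR m * (1 - lam))
    with (INR m * (- (tau mu q - eta) * lam + (ts - kappa) * (1 - lam))) by ring.
  replace (- (t0 + eps) * INR m) with (INR m * (- (t0 + eps))) by ring.
  apply Rmult_le_compat_l; auto.
Qed.
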